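(* Let $\alpha>1/2$, $d\in\mathbb N$, $1\ge\gamma_1\ge\dots\ge\gamma_d>0$, and $m\in\mathbb N_0$. Then $$K^\alpha_{2^{m-(d-1)},\boldsymbol\gamma,d}\subseteq Q^\alpha_{m,\boldsymbol\gamma,d}\subseteq K^\alpha_{2^m,\boldsymbol\gamma,d}.$$
   Context: For $\gamma>0$, $h\in\mathbb Z$: $r_\alpha(\gamma,h)=\max(|h|^{2\alpha}/\gamma,1)$, and $r_\alpha(\boldsymbol\gamma,\boldsymbol k)=\prod_{j=1}^dr_\alpha(\gamma_j,k_j)$ for $\boldsymbol k\in\mathbb Z^d$. For $\nu>0$, the weighted continuous hyperbolic cross is $K^\alpha_{\nu,\boldsymbol\gamma,d}=\{\boldsymbol k\in\mathbb Z^d:r_\alpha(\boldsymbol\gamma,\boldsymbol k)\le\nu\}$. The weighted step hyperbolic cross is $Q^\alpha_{m,\boldsymbol\gamma,d}=\bigcup_{\boldsymbol t\in\mathbb N_0^d,\ \|\boldsymbol t\|_1=m}\{\boldsymbol k\in\mathbb Z^d:r_\alpha(\gamma_j,k_j)\le2^{t_j}\ \forall j\in[d]\}$. *)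

(* Defs.v *)
From HB Require Import structures.
From mathcomp Require Import all_boot all_order all_algebra.
From mathcomp Require Import all_classical all_reals all_analysis.
Set Implicit Arguments. Unset Strict Implicit. Unset Printing Implicit Defensive.
Import Order.TTheory GRing.Theory Num.Theory.
Local Open Scope ring_scope.
Local Open Scope classical_set_scope.

(* r_alpha(gamma, h) = max(|h|^(2 alpha) / gamma, 1), h integer.
   powR satisfies 0 `^ x = 0 for x <> 0, so 0^(2 alpha) = 0. *)
Definition r1 {R : realType} (alpha gamma : R) (h : int) : R :=
  Num.max (((`|h|%N)%:R `^ (2 * alpha)) / gamma) 1.

Definition rvec {R : realType} {d : nat} (alpha : R) (gamma : 'I_d -> R)
  (k : 'I_d -> int) : R :=
  \prod_(j < d) r1 alpha (gamma j) (k j).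

Definition Kcross {R : realType} {d : nat} (alpha nu : R) (gamma : 'I_d -> R)
  : set ('I_d -> int) :=
  [set k | rvec alpha gamma k <= nu].

Definition Qcross {R : realType} {d : nat} (alpha : R) (m : nat)
  (gamma : 'I_d -> R) : set ('I_d -> int) :=
  [set k | exists t : 'I_d -> nat, (\sum_(j < d) t j)%N = m /\
           forall j : 'I_d, r1 alpha (gamma j) (k j) <= 2 ^+ (t j)].

(* Main.v *)
Require Import Defs.
From HB Require Import structures.
From mathcomp Require Import all_boot all_order all_algebra.
From mathcomp Require Import all_classical all_reals all_analysis.
From mathcomp Require Import zify lra.
Import Order.TTheory GRing.Theory Num.Theory.
Local Open Scope ring_scope.
Local Open Scope classical_set_scope.

Lemma r1_ge1 (R : realType) (alpha g : R) h : 1 <= r1 alpha g h.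
Proof. by rewrite /r1 le_max lexx orbT. Qed.

Lemma pow2_bound (R : realType) (x : R) : exists n : nat, x <= 2 ^+ n.
Proof.
have [x0|x0] := leP x 0.
  by exists 0%N; rewrite expr0 (le_trans x0) // ler01.
exists (Num.Def.archi_bound x).
apply: (le_trans (ltW (archi_boundP (ltW x0)))).
have := ltn_expl (Num.Def.archi_bound x) (isT : (1 < 2)%N).
move/ltnW; rewrite -(ler_nat R) natrX => H; exact: H.
Qed.

Theorem lemma3p17 (R : realType) (alpha : R) (d m : nat) (gamma : 'I_d -> R) :
  1 / 2 < alpha -> (0 < d)%N ->
  (forall j : 'I_d, 0 < gamma j <= 1) ->
  (forall i j : 'I_d, (i <= j)%N -> gamma j <= gamma i) ->
  Kcross alpha ((2 : R) ^ (m%:Z - (d%:Z - 1))) gamma `<=` Qcross alpha m gamma /\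
  Qcross alpha m gamma `<=` Kcross alpha ((2 : R) ^+ m) gamma.
Proof.
move=> _ hd _ _; split; last first.
  move=> k [t [ht hk]]; rewrite /Kcross /rvec /= -ht -prodrXr.
  apply: ler_prod => j _; rewrite hk andbT.
  exact: le_trans ler01 (r1_ge1 _ _ _ _).
move=> k; rewrite /Kcross /rvec /= => hK.
set r := fun j => r1 alpha (gamma j) (k j).
have exP j : exists n : nat, r j <= 2 ^+ n by apply: pow2_bound.
pose t j := ex_minn (exP j).
have tP j : r j <= 2 ^+ t j by rewrite /t; case: ex_minnP.
have tM j : (0 < t j)%N -> 2 ^+ t j < 2 * r j.
  rewrite /t; case: ex_minnP => n _ hmin n0.
  rewrite ltNge; apply/negP => H.
  have : (n <= n.-1)%N.
    apply: hmin; rewrite -(@ler_pM2l _ 2) //.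
    by rewrite -exprS prednK.
  by case: n n0 {H hmin}=> // n _; rewrite ltnn.
have r0 j : 0 <= r j by exact: le_trans ler01 (r1_ge1 _ _ _ _).
have key : (\sum_(j < d) t j <= m)%N.
  have h2 : (2 : R) ^+ d * 2 ^ (m%:Z - (d%:Z - 1)) = 2 ^+ m.+1.
    rewrite !exprnP -expfzDr //; congr (_ ^ _); lia.
  have [allpos|] := boolP [forall j, (0 < t j)%N].
    rewrite -ltnS -(ltr_eXn2l (_ : (1:R) < 2)) ?ltr1n // -h2 -prodrXr.
    apply: (lt_le_trans (y := \prod_(j < d) (2 * r j))).
      apply: ltr_prod.
        by apply/hasP; exists (Ordinal hd); rewrite ?mem_index_enum.
      move=> j _; rewrite exprn_ge0 ?ler0n //=; apply: tM.
      by move/forallP: allpos.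
    rewrite big_split /= prodr_const card_ord ler_pM2l ?exprn_gt0 ?ltr0n //.
  rewrite negb_forall => /existsP [j0]; rewrite -leqNgt leqn0 => /eqP tj0.
  rewrite -(ler_eXn2l (_ : (1:R) < 2)) ?ltr1n // -prodrXr.
  rewrite (bigD1 j0) //= tj0 expr0 mul1r.
  apply: (@le_trans _ _ (\prod_(j < d | j != j0) (2 * r j))).
    apply: ler_prod => j _; rewrite exprn_ge0 ?ler0n //=.
    case: (posnP (t j)) => [->|/tM/ltW //].
    by rewrite expr0; have := r1_ge1 _ alpha (gamma j) (k j); rewrite -/(r j); lra.
  rewrite big_split /= prodr_const.
  have -> : #|[pred j | j != j0]| = d.-1.
    by rewrite cardC1 card_ord.
  have h3 : (2 : R) ^+ m = 2 ^+ d.-1 * 2 ^ (m%:Z - (d%:Z - 1)).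
    rewrite !exprnP -expfzDr //; congr (_ ^ _); rewrite -subn1; lia.
  rewrite h3 ler_pM2l ?exprn_gt0 ?ltr0n //.
  apply: le_trans hK.
  rewrite [X in _ <= X](bigD1 j0) //= ler_peMl //.
    by apply: prodr_ge0 => j _.
  exact: r1_ge1.
pose j0 := Ordinal hd.
exists (fun j => t j + (j == j0) * (m - \sum_(i < d) t i))%N; split.
  rewrite big_split /= [X in (_ + X)%N](bigD1 j0) //= mul1n.
  have -> : (\sum_(i < d | i != j0) (i == j0) * (m - \sum_(i0 < d) t i0) = 0)%N.
    apply: big1 => j /negbTE ->; exact: mul0n.
  rewrite addn0; exact: subnKC key.
move=> j; apply: (le_trans (tP j)).
by rewrite (ler_eXn2l (_ : (1:R) < 2)) ?ltr1n // leq_addr.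
Qed.
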